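(* Let $p\ge 1$, $\sigma>0$, and let $H:\mathcal{H}\times\mathcal{X}^n\to\mathbb{R}$ be such that for every $h\in\mathcal{H}$ the random variable $H(h,\mathbf{X})$, $\mathbf{X}\sim\mu^n$, is $\sigma$-subgaussian. Let $Z(\mathbf{x})=\int_{\mathcal{H}}e^{H(h,\mathbf{x})}d\pi(h)$ (assumed finite and positive, with $\int_{\mathcal{H}}e^{\mathbb{E}[H(h,\mathbf{X})]}d\pi(h)$ finite and positive). Then: (i) $\ln\mathbb{E}\left[e^{p\left(-\ln Z(\mathbf{X})+\mathbb{E}[\ln Z(\mathbf{X}')]\right)}\right]\le p^2\sigma^2$. (ii) If $f:\mathcal{X}^n\to\mathbb{R}$ is such that $f(\mathbf{X})$ is $\rho$-subgaussian, then $$\ln\mathbb{E}\left[e^{p\left(f(\mathbf{X})-\mathbb{E}[f(\mathbf{X}')]-\ln Z(\mathbf{X})+\mathbb{E}[\ln Z(\mathbf{X}')]\right)}\right]\le p^2(\rho+\sigma)^2.$$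
   Context: $\mathcal{X}$ is a measurable space with probability measure $\mu$; $\mathbf{X}\sim\mu^n$ and $\mathbf{X}'$ is an independent copy. $\mathcal{H}$ is a measurable space with nonnegative measure $\pi$; $H$ is jointly measurable. A real random variable $Y$ is $\sigma$-subgaussian if $\mathbb{E}[e^{\lambda(Y-\mathbb{E}[Y])}]\le e^{\lambda^2\sigma^2/2}$ for every $\lambda\in\mathbb{R}$. All expectations appearing are assumed finite. *)

(* Defs.v *)
From HB Require Import structures.
From mathcomp Require Import all_boot all_order all_algebra.
From mathcomp Require Import all_classical all_reals all_analysis.
Set Implicit Arguments. Unset Strict Implicit. Unset Printing Implicit Defensive.
Import Order.TTheory GRing.Theory Num.Theory.
Local Open Scope classical_set_scope.
Local Open Scope ring_scope.

(* Measurable type of n-tuples over T is the library's (product sigma-algebra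
   generated by the coordinate maps). *)

(** [P] is the n-fold product probability measure [mu^n] on [n.-tuple X]:
    it agrees with the product of [mu] on measurable rectangles (this
    characterizes [mu^n] uniquely). *)
Definition is_product_prob {d} {X : measurableType d} {R : realType} (n : nat)
  (mu : probability X R) (P : probability (n.-tuple X) R) : Prop :=
  forall A : 'I_n -> set X, (forall i, measurable (A i)) ->
    P [set x : n.-tuple X | forall i, A i (tnth x i)] = (\prod_(i < n) mu (A i))%E.

(** real-valued mean E[Y] (meaningful when Y is integrable) *)
Definition mean {d} {T : measurableType d} {R : realType}
  (P : probability T R) (Y : T -> R) : R := fine ('E_P[Y])%E.

Definition subgaussian {d} {T : measurableType d} {R : realType}
  (P : probability T R) (Y : T -> R) (sigma : R) : Prop :=
  forall lam : R,
    ('E_P[fun x => expR (lam * (Y x - mean P Y))] <=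
      (expR (lam ^+ 2 * sigma ^+ 2 / 2))%:E)%E.

Definition Zpart {dH dT} {Hs : measurableType dH} {T : measurableType dT}
  {R : realType} (pi : {measure set Hs -> \bar R}) (H : Hs -> T -> R) (x : T)
  : \bar R := (\int[pi]_h (expR (H h x))%:E)%E.

(* Main.v *)
Require Import Defs.
From HB Require Import structures.
From mathcomp Require Import all_boot all_order all_algebra.
From mathcomp Require Import all_classical all_reals all_analysis.
From mathcomp Require Import measurable_realfun.
From mathcomp Require Import ring lra.
Import Order.TTheory GRing.Theory Num.Theory.
Local Open Scope classical_set_scope.
Local Open Scope ring_scope.

Definition sfm d (T : measurableType d) (R : realType) (mu : {measure set T -> \bar R})
  (h : sigma_finite setT mu) : set T -> \bar R := mu.
Arguments sfm {d T R} mu h.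

Section sfm.
Context d (T : measurableType d) (R : realType) (mu : {measure set T -> \bar R})
  (h : sigma_finite setT mu).
HB.instance Definition _ := Measure.on (sfm mu h).
HB.instance Definition _ := Measure_isSigmaFinite.Build _ _ _ (sfm mu h) h.
End sfm.

Lemma tang (R : realType) (q w : R) : 0 <= q -> 1 + q <= expR (- q * w) + q * expR w.
Proof.
move=> q0; have h1 := expR_ge1Dx (- q * w); have h2 := expR_ge1Dx w.
have h3 : q * (1 + w) <= q * expR w by rewrite ler_wpM2l.
lra.
Qed.

Lemma convexp (R : realType) (t u v : R) : 0 <= t -> t <= 1 ->
  expR (t * u + (1 - t) * v) <= t * expR u + (1 - t) * expR v.
Proof.
have key : forall m w : R, expR m * (1 + (w - m)) <= expR w.
  move=> m w; rewrite -{2}(subrKC m w) expRD.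
  by apply: ler_wpM2l; [exact: expR_ge0 | exact: expR_ge1Dx].
move=> t0 t1; set m := t * u + (1 - t) * v.
have hu := key m u; have hv := key m v.
have hu' := ler_wpM2l t0 hu.
have hv' : (1 - t) * (expR m * (1 + (v - m))) <= (1 - t) * expR v.
  by rewrite ler_wpM2l // subr_ge0.
have e : t * (expR m * (1 + (u - m))) + (1 - t) * (expR m * (1 + (v - m))) = expR m.
  rewrite /m; ring.
lra.
Qed.

Lemma lim_arg (R : realType) (E : \bar R) (k s : R) : 0 < k -> 0 <= s ->
  (forall r, 0 < r -> (E <= (expR (k * (r + s) ^+ 2))%:E)%E) ->
  (E <= (expR (k * s ^+ 2))%:E)%E.
Proof.
move=> k0 s0 hE.
case: E hE => [e| |] hE; last by rewrite leNye.
  rewrite lee_fin leNgt; apply/negP => he.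
  have e0 : 0 < e by apply: lt_trans he; exact: expR_gt0.
  pose d := ln e - k * s ^+ 2.
  have d0 : 0 < d by rewrite /d subr_gt0 -ltr_expR lnK // posrE.
  pose c := 2 * k * (1 + 2 * s).
  have c0 : 0 < c by rewrite /c; apply: mulr_gt0; [apply: mulr_gt0 => //|lra].
  pose r := Num.min 1 (d / c).
  have r0 : 0 < r by rewrite /r lt_min ltr01 divr_gt0.
  have r1 : r <= 1 by rewrite /r ge_min lexx.
  have rd : r * c <= d by rewrite -ler_pdivlMr // /r ge_min lexx orbT.
  have := hE r r0; rewrite lee_fin -(lnK e0) ler_expR => h.
  have h2 : k * (r + s) ^+ 2 = k * s ^+ 2 + k * r * (r + 2 * s) by ring.
  have h3 : k * r * (r + 2 * s) <= k * r * (1 + 2 * s).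
    by apply: ler_wpM2l; [rewrite mulr_ge0 // ltW | lra].
  have h4 : 2 * (k * r * (1 + 2 * s)) = r * c by rewrite /c; ring.
  have dd : d = ln e - k * s ^+ 2 by [].
  lra.
have := hE 1 ltr01; by rewrite leye_eq.
Qed.

Section Main.
Context (R : realType) (dX dH : measure_display) (X : measurableType dX) (n : nat)
  (P : probability (n.-tuple X) R) (Hs : measurableType dH)
  (pi : {measure set Hs -> \bar R}) (H : Hs -> n.-tuple X -> R) (sigma : R).
Hypothesis mH : measurable_fun setT (fun z : Hs * n.-tuple X => H z.1 z.2).
Hypothesis iH : forall h, P.-integrable setT (fun x => (H h x)%:E).
Hypothesis sgH : forall h, subgaussian P (H h) sigma.
Hypothesis Zfin : forall x, (0 < Zpart pi H x < +oo)%E.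
Hypothesis Zbfin : (0 < \int[pi]_h (expR (mean P (H h)))%:E < +oo)%E.
Hypothesis iL : P.-integrable setT (fun x => (ln (fine (Zpart pi H x)))%:E).

Let x0 : n.-tuple X := point.

Lemma mHx x : measurable_fun setT (fun h => H h x).
Proof. exact: (measurable_fun_pair1 (f := fun z : Hs * n.-tuple X => H z.1 z.2) x mH). Qed.

Lemma mHh h : measurable_fun setT (H h).
Proof. by have /measurable_int/measurable_EFinP := iH h. Qed.

Lemma pi_sf : sigma_finite setT pi.
Proof.
pose g h := (expR (H h x0))%:E.
have mg : measurable_fun setT g.
  by apply/measurable_EFinP; apply: measurableT_comp => //; exact: mHx.
exists (fun k => setT `&` [set h | (k.+1%:R^-1)%:E <= `|g h|])%E.
  apply/seteqP; split => [h _|h]//.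
  have [k hk] := ltr_add_invr (expR_gt0 (H h x0)); rewrite add0r in hk.
  by exists k => //; split => //=; rewrite lee_fin ger0_norm ?expR_ge0 // ltW.
move=> k; split.
  by apply: emeasurable_fun_c_infty => //; exact: measurableT_comp.
have := le_integral_abse pi measurableT mg (a := k.+1%:R^-1) ltac:(by rewrite invr_gt0).
have Zx0 : (\int[pi]_h `|g h| < +oo)%E.
  rewrite (eq_integral (fun h => g h)); first by case/andP: (Zfin x0).
  by move=> h _; rewrite /g gee0_abs // lee_fin expR_ge0.
move=> /le_lt_trans /(_ Zx0).
set F := pi _.
case: F => [r _| |//]; first exact: ltry.
by rewrite mulry gtr0_sg ?invr_gt0 // mul1e.
Qed.

Let pis := sfm pi pi_sf.
Let Eh h := mean P (H h).

Lemma mEh : measurable_fun setT Eh.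
Proof.
pose f z := (H z.1 z.2)%:E.
have mf : measurable_fun setT f by exact: measurableT_comp.
have := @measurable_fun_fubini_tonelli_F _ _ _ _ _ P (f^\+)%E (measurable_funepos mf) (fun z => funepos_ge0 _ _).
have := @measurable_fun_fubini_tonelli_F _ _ _ _ _ P (f^\-)%E (measurable_funeneg mf) (fun z => funeneg_ge0 _ _).
move=> mm mp.
have -> : Eh = fun h => fine (fubini_F P f^\+ h - fubini_F P f^\- h)%E.
  apply: boolp.funext => h; rewrite /Eh /mean unlock integralE /fubini_F.
  by congr (fine (_ - _)); apply: eq_integral => x _; rewrite !(funeposE, funenegE).
exact: (measurableT_comp (fine_measurable measurableT) (emeasurable_funB mp mm)).
Qed.

Lemma mHswap : measurable_fun setT (fun z : n.-tuple X * Hs => H z.2 z.1).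
Proof.
rewrite (_ : (fun z => H z.2 z.1) = (fun z : Hs * n.-tuple X => H z.1 z.2) \o unstable.swap) //.
by apply: measurableT_comp => //; exact: measurable_swap.
Qed.

Lemma mEh2 : measurable_fun setT (fun z : n.-tuple X * Hs => Eh z.2).
Proof.
rewrite (_ : (fun z => Eh z.2) = Eh \o snd) //.
by apply: measurableT_comp => //; exact: mEh.
Qed.

Let Zb := (\int[pi]_h (expR (Eh h))%:E)%E.
Let zb := fine Zb.

Lemma K (q : R) : (\int[P]_x \int[pi]_h (expR (Eh h + q * (H h x - Eh h)))%:E
   <= (expR (q ^+ 2 * sigma ^+ 2 / 2))%:E * Zb)%E.
Proof.
pose g := fun z : n.-tuple X * Hs => (expR (Eh z.2 + q * (H z.2 z.1 - Eh z.2)))%:E.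
have mg : measurable_fun setT g.
  apply/measurable_EFinP; apply: measurableT_comp => //.
  apply: measurable_funD; first exact: mEh2.
  apply: measurable_funM; first exact: measurable_cst.
  apply: measurable_funB; [exact: mHswap | exact: mEh2].
have g0 : forall z, (0 <= g z)%E by move=> z; rewrite lee_fin expR_ge0.
have -> : (\int[P]_x \int[pi]_h (expR (Eh h + q * (H h x - Eh h)))%:E
   = \int[pi]_h \int[P]_x g (x, h))%E.
  exact: (fubini_tonelli (m1 := P) (m2 := pis) g mg g0).
rewrite /Zb -ge0_integralZl_EFin //; last first.
  by apply/measurable_EFinP; apply: measurableT_comp => //; exact: mEh.
apply: ge0_le_integral => //.
- by move=> h _; apply: integral_ge0 => x _; exact: g0.
- exact: (measurable_fun_fubini_tonelli_G (m1 := P) g mg g0).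
- apply: measurable_funeM.
  by apply/measurable_EFinP; apply: measurableT_comp => //; exact: mEh.
move=> h _.
have -> : (\int[P]_x g (x, h) = (expR (Eh h))%:E * 'E_P[fun x => expR (q * (H h x - Eh h))])%E.
  rewrite unlock -ge0_integralZl_EFin //; last first.
    apply/measurable_EFinP; apply: measurableT_comp => //.
    apply: measurable_funM; first exact: measurable_cst.
    by apply: measurable_funB; [exact: mHh | exact: measurable_cst].
  by apply: eq_integral => x _; rewrite /g /= expRD EFinM.
rewrite [leRHS]muleC; apply: lee_wpmul2l; first by rewrite lee_fin expR_ge0.
exact: sgH.
Qed.

Let zz x := fine (Zpart pi H x).

Lemma zz_gt0 x : 0 < zz x.
Proof. exact: fine_gt0 (Zfin x). Qed.

Lemma ZpartE x : Zpart pi H x = (zz x)%:E.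
Proof.
have /andP[a b] := Zfin x.
by rewrite /zz fineK // ge0_fin_numE // ltW.
Qed.

Lemma zb_gt0 : 0 < zb.
Proof. exact: fine_gt0 Zbfin. Qed.

Lemma ZbE : Zb = zb%:E.
Proof.
have /andP[a b] := Zbfin.
by rewrite /zb fineK // ge0_fin_numE // ltW.
Qed.

Lemma mlnz : measurable_fun setT (fun x => ln (zz x)).
Proof. by have /measurable_int/measurable_EFinP := iL. Qed.

Lemma mzz : measurable_fun setT zz.
Proof.
rewrite (_ : zz = expR \o (fun x => ln (zz x))).
  by apply: measurableT_comp => //; exact: mlnz.
by apply: boolp.funext => x /=; rewrite lnK // posrE zz_gt0.
Qed.

Lemma Ea : (\int[P]_x (zz x)%:E <= (expR (sigma ^+ 2 / 2))%:E * Zb)%E.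
Proof.
have := K 1; rewrite expr1n mul1r.
apply: le_trans; rewrite le_eqVlt; apply/orP; left; apply/eqP.
apply: eq_integral => x _; rewrite -ZpartE /Zpart.
by apply: eq_integral => h _; rewrite mul1r addrC subrK.
Qed.

Lemma izz : P.-integrable setT (fun x => (zz x)%:E).
Proof.
apply/integrableP; split; first by apply/measurable_EFinP; exact: mzz.
rewrite (eq_integral (fun x => (zz x)%:E)); last first.
  by move=> x _; rewrite gee0_abs // lee_fin ltW // zz_gt0.
apply: (le_lt_trans Ea); rewrite ZbE -EFinM; exact: ltry.
Qed.

Lemma L_le : mean P (fun x => ln (zz x)) <= ln zb + sigma ^+ 2 / 2.
Proof.
pose c := zb * expR (sigma ^+ 2 / 2).
have c0 : 0 < c by rewrite mulr_gt0 ?zb_gt0 ?expR_gt0.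
have lnc : ln c = ln zb + sigma ^+ 2 / 2.
  by rewrite /c lnM ?posrE ?zb_gt0 ?expR_gt0 // expRK.
have pw x : ln (zz x) <= (ln c - 1) + c^-1 * zz x.
  have := expR_ge1Dx (ln (zz x / c)).
  rewrite lnK ?posrE ?divr_gt0 ?zz_gt0 // ln_div ?posrE ?zz_gt0 //.
  by rewrite mulrC; lra.
have iR : P.-integrable setT (fun x => ((ln c - 1)%:E + (c^-1)%:E * (zz x)%:E)%E).
  apply: (integrableD measurableT).
    exact: (@finite_measure_integrable_cst _ _ _ P setT (ln c - 1) measurableT).
  exact: (integrableZl measurableT _ izz).
have := le_integral measurableT iL iR.
have -> : (\int[P]_x ((ln c - 1)%:E + (c^-1)%:E * (zz x)%:E) =
           (ln c - 1)%:E + (c^-1)%:E * \int[P]_x (zz x)%:E)%E.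
  rewrite integralD //; last first.
    exact: (integrableZl measurableT _ izz).
    exact: (@finite_measure_integrable_cst _ _ _ P setT (ln c - 1) measurableT).
  rewrite integral_cst // integralZl //; last exact: izz.
  congr (_ + _); rewrite [X in (_ * X)%E](_ : _ = 1%E) ?mule1 //; exact: probability_setT.
move=> /(_ (fun x _ => pw x)).
rewrite -lee_fin => h; apply: (le_trans _ (le_trans h _)).
  by rewrite /mean unlock fineK // (integrable_fin_num measurableT iL).
rewrite lnc.
have h2 : ((c^-1)%:E * \int[P]_x (zz x)%:E <= 1%:E)%E.
  apply: le_trans (lee_wpmul2l _ Ea) _; first by rewrite lee_fin invr_ge0 ltW.
  by rewrite ZbE -!EFinM lee_fin /c [X in _ * X]mulrC mulVf // gt_eqF // -/c.
apply: le_trans (leeD2l _ h2) _; rewrite -EFinD lee_fin; lra.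
Qed.

Lemma mEhE : measurable_fun setT (fun h => (expR (Eh h))%:E).
Proof. by apply/measurable_EFinP; apply: measurableT_comp => //; exact: mEh. Qed.

Lemma mIh q x : measurable_fun setT (fun h => (expR (Eh h + q * (H h x - Eh h)))%:E).
Proof.
apply/measurable_EFinP; apply: measurableT_comp => //.
apply: measurable_funD; first exact: mEh.
apply: measurable_funM; first exact: measurable_cst.
by apply: measurable_funB; [exact: mHx | exact: mEh].
Qed.

Lemma PW (q : R) x : 0 <= q ->
  (zb%:E <= (expR (q * (ln (zz x) - ln zb)))%:E *
     \int[pi]_h (expR (Eh h + (- q) * (H h x - Eh h)))%:E)%E.
Proof.
move=> q0.
set s := ln (zz x) - ln zb.
set I := (\int[pi]_h _)%E.
have pw h : (((1 + q) * expR (Eh h))%:E <= (expR (q * s))%:E * (expR (Eh h + - q * (H h x - Eh h)))%:E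
      + (q * expR (- s))%:E * (expR (H h x))%:E)%E.
  rewrite -!EFinM -EFinD lee_fin.
  have t := @tang R q (H h x - Eh h - s) q0.
  have e1 : expR (q * s) * expR (Eh h + - q * (H h x - Eh h)) =
            expR (Eh h) * expR (- q * (H h x - Eh h - s)).
    by rewrite -!expRD; congr expR; ring.
  have e2 : q * expR (- s) * expR (H h x) = expR (Eh h) * (q * expR (H h x - Eh h - s)).
    by rewrite -mulrA -expRD mulrCA -expRD; congr (_ * expR _); ring.
  by rewrite e1 e2 -mulrDr mulrC ler_wpM2l // expR_ge0.
have mexpH : measurable_fun setT (fun h => (expR (H h x))%:E).
  by apply/measurable_EFinP; apply: measurableT_comp => //; exact: mHx.
have hint : (\int[pi]_h ((1 + q) * expR (Eh h))%:E <=
    \int[pi]_h ((expR (q * s))%:E * (expR (Eh h + - q * (H h x - Eh h)))%:E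
      + (q * expR (- s))%:E * (expR (H h x))%:E))%E.
  apply: ge0_le_integral => //.
  - by move=> h _; rewrite lee_fin mulr_ge0 ?expR_ge0 //; lra.
  - apply/measurable_EFinP; apply: measurable_funM; first exact: measurable_cst.
    by apply: measurableT_comp => //; exact: mEh.
  - apply: emeasurable_funD; apply: measurable_funeM; [exact: mIh | exact: mexpH].
move: hint; under eq_integral => h _ do rewrite EFinM.
rewrite ge0_integralZl_EFin //; [|exact: mEhE|lra].
rewrite ge0_integralD //; last 3 first.
- by apply: measurable_funeM; exact: mIh.
- by move=> h _; rewrite mule_ge0 // lee_fin ?expR_ge0 // mulr_ge0 // expR_ge0.
- by apply: measurable_funeM; exact: mexpH.
rewrite ge0_integralZl_EFin //; last exact: mIh.
rewrite ge0_integralZl_EFin //; last by rewrite mulr_ge0 // expR_ge0.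
have -> : (\int[pi]_h (expR (H h x))%:E)%E = (zz x)%:E by rewrite -ZpartE.
have -> : (\int[pi]_h (expR (Eh h))%:E)%E = zb%:E by rewrite -ZbE.
have e3 : q * expR (- s) * zz x = q * zb.
  rewrite /s opprB expRB lnK ?posrE ?zb_gt0 // lnK ?posrE ?zz_gt0 //.
  by rewrite -mulrA divfK // gt_eqF // zz_gt0.
rewrite -EFinM -EFinM e3 mulrDl mul1r EFinD.
by rewrite leeD2rE.
Qed.

Lemma mG q : measurable_fun setT
  (fun z : n.-tuple X * Hs => (expR (Eh z.2 + q * (H z.2 z.1 - Eh z.2)))%:E).
Proof.
apply/measurable_EFinP; apply: measurableT_comp => //.
apply: measurable_funD; first exact: mEh2.
apply: measurable_funM; first exact: measurable_cst.
apply: measurable_funB; [exact: mHswap | exact: mEh2].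
Qed.

Lemma mIx q : measurable_fun setT
  (fun x => \int[pi]_h (expR (Eh h + q * (H h x - Eh h)))%:E)%E.
Proof.
have g0 : forall z : n.-tuple X * Hs, (0 <= (expR (Eh z.2 + q * (H z.2 z.1 - Eh z.2)))%:E)%E.
  by move=> z; rewrite lee_fin expR_ge0.
exact: (measurable_fun_fubini_tonelli_F (m2 := pis) _ (mG q) g0).
Qed.


Lemma mexpz q : measurable_fun setT (fun x => (expR (q * ln (zz x)))%:E).
Proof.
apply/measurable_EFinP; apply: measurableT_comp => //.
by apply: measurable_funM; [exact: measurable_cst | exact: mlnz].
Qed.

Lemma Eb q : 0 <= q -> (\int[P]_x (expR (- q * ln (zz x)))%:E <=
   (expR (- q * ln zb + q ^+ 2 * sigma ^+ 2 / 2))%:E)%E.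
Proof.
move=> q0.
have pw x : ((zb * expR (- q * ln (zz x)))%:E <= (expR (- q * ln zb))%:E *
     \int[pi]_h (expR (Eh h + (- q) * (H h x - Eh h)))%:E)%E.
  rewrite mulrC EFinM.
  have e0 : (0 <= (expR (- q * ln (zz x)))%:E)%E by rewrite lee_fin expR_ge0.
  move/(lee_wpmul2l e0): (PW q x q0) => hh; apply: (le_trans hh).
  move: (\int[pi]_h _)%E (ln (zz x)) (ln zb) => I a b.
  rewrite muleA -EFinM -expRD.
  by rewrite (_ : - q * a + q * (a - b) = - q * b); last ring.
have H1 : (\int[P]_x (zb * expR (- q * ln (zz x)))%:E <= \int[P]_x ((expR (- q * ln zb))%:E *
     \int[pi]_h (expR (Eh h + (- q) * (H h x - Eh h)))%:E))%E.
  apply: ge0_le_integral => //.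
  - by move=> x _; rewrite lee_fin mulr_ge0 ?expR_ge0 // ltW // zb_gt0.
  - apply/measurable_EFinP; apply: measurable_funM; first exact: measurable_cst.
    by apply/measurable_EFinP; exact: mexpz.
  - by apply: measurable_funeM; exact: mIx.
move: H1; under eq_integral => x _ do rewrite EFinM.
rewrite ge0_integralZl_EFin //; [|exact: mexpz|exact: ltW zb_gt0].
rewrite ge0_integralZl_EFin //; last 2 first.
- by move=> x _; apply: integral_ge0 => h _; rewrite lee_fin expR_ge0.
- exact: mIx.
move=> h1; have K' := K (- q); rewrite sqrrN in K'.
have e0 : (0 <= (expR (- q * ln zb))%:E)%E by rewrite lee_fin expR_ge0.
have h2 := le_trans h1 (lee_wpmul2l e0 K'); rewrite ZbE in h2.
have zbf : (zb%:E \is a fin_num)%E by [].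
rewrite -(lee_pmul2l zbf) ?lte_fin ?zb_gt0 //; apply: (le_trans h2).
move: (ln zb) zb zb_gt0 => a b b0.
by rewrite -!EFinM lee_fin expRD le_eqVlt; apply/orP; left; apply/eqP; ring.
Qed.

Lemma B q : 0 <= q ->
  ('E_P[fun x => expR (q * (- ln (zz x) + mean P (fun x => ln (zz x))))]
    <= (expR (q ^+ 2 * sigma ^+ 2 / 2 + q * (sigma ^+ 2 / 2)))%:E)%E.
Proof.
move=> q0; have hL := L_le.
move: (mean P (fun x => ln (zz x))) hL => L hL.
rewrite unlock.
rewrite (eq_integral (fun x => (expR (q * L))%:E * (expR (- q * ln (zz x)))%:E)%E); last first.
  by move=> x _; rewrite -EFinM -expRD; congr (expR _)%:E; ring.
rewrite ge0_integralZl_EFin //; last exact: mexpz.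
have e0 : (0 <= (expR (q * L))%:E)%E by rewrite lee_fin expR_ge0.
apply: (le_trans (lee_wpmul2l e0 (Eb q q0))).
rewrite -EFinM lee_fin -expRD ler_expR.
have : q * L <= q * (ln zb + sigma ^+ 2 / 2) by rewrite ler_wpM2l.
move: (ln zb) => a; lra.
Qed.

Lemma Cpos p f rho : 1 <= p -> 0 < rho -> 0 < sigma ->
  P.-integrable setT (fun x => (f x)%:E) -> subgaussian P f rho ->
  ('E_P[fun x => expR (p * (f x - mean P f - ln (zz x) + mean P (fun x => ln (zz x))))]
    <= (expR (p ^+ 2 * (rho + sigma) ^+ 2))%:E)%E.
Proof.
move=> p1 r0 s0 iF sgF.
have mf : measurable_fun setT f by have /measurable_int/measurable_EFinP := iF.
have hB := fun q => B q.
move: (mean P (fun x => ln (zz x))) hB => L hB.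
rewrite /subgaussian in sgF; move: (mean P f) sgF => Ef sgF.
pose t := rho / (rho + sigma).
pose a := p * (rho + sigma) / rho.
pose b := p * (rho + sigma) / sigma.
pose al := a ^+ 2 * rho ^+ 2 / 2.
pose be := b ^+ 2 * sigma ^+ 2 / 2 + b * (sigma ^+ 2 / 2).
pose ga := t * al + (1 - t) * be.
pose c := al - ga.
pose d := ga - be.
have rs0 : rho + sigma != 0 by rewrite gt_eqF // addr_gt0.
have ta : t * a = p by rewrite /t /a; field; rewrite gt_eqF.
have tb : (1 - t) * b = p by rewrite /t /b; field; rewrite gt_eqF.
have t0 : 0 <= t by rewrite /t divr_ge0 // ltW // addr_gt0.
have t1 : t <= 1 by rewrite /t ler_pdivrMr ?addr_gt0 // mul1r lerDl ltW.
have pw x : expR (p * (f x - Ef - ln (zz x) + L)) <=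
    t * expR (a * (f x - Ef) - c) + (1 - t) * expR (b * (- ln (zz x) + L) + d).
  have e : p * (f x - Ef - ln (zz x) + L) =
      t * (a * (f x - Ef) - c) + (1 - t) * (b * (- ln (zz x) + L) + d).
    have e0 : - (t * c) + (1 - t) * d = 0 by rewrite /c /d /ga; ring.
    transitivity ((t * a) * (f x - Ef) + ((1 - t) * b) * (- ln (zz x) + L) + (- (t * c) + (1 - t) * d)).
      by rewrite ta tb e0; ring.
    ring.
  by rewrite e; exact: (@convexp R t _ _ t0 t1).
have mA : measurable_fun setT (fun x => (expR (a * (f x - Ef)))%:E).
  apply/measurable_EFinP; apply: measurableT_comp => //.
  apply: measurable_funM; first exact: measurable_cst.
  by apply: measurable_funB => //; exact: measurable_cst.
have mBB : measurable_fun setT (fun x => (expR (b * (- ln (zz x) + L)))%:E).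
  apply/measurable_EFinP; apply: measurableT_comp => //.
  apply: measurable_funM; first exact: measurable_cst.
  apply: measurable_funD; last exact: measurable_cst.
  exact: measurable_funN mlnz.
have b0 : 0 <= b by rewrite /b divr_ge0 ?mulr_ge0 ?ltW ?addr_gt0 //; lra.
have ct0 : 0 <= t * expR (- c) by rewrite mulr_ge0 ?expR_ge0.
have ct1 : 0 <= (1 - t) * expR d by rewrite mulr_ge0 ?expR_ge0 // subr_ge0.
rewrite unlock.
apply: (@le_trans _ _ (\int[P]_x ((t * expR (- c))%:E * (expR (a * (f x - Ef)))%:E
   + ((1 - t) * expR d)%:E * (expR (b * (- ln (zz x) + L)))%:E))%E).
  apply: ge0_le_integral => //.
  - apply/measurable_EFinP; apply: measurableT_comp => //.
    apply: measurable_funM; first exact: measurable_cst.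
    apply: measurable_funD; last exact: measurable_cst.
    apply: measurable_funB; last exact: mlnz.
    by apply: measurable_funB => //; exact: measurable_cst.
  - by apply: emeasurable_funD; apply: measurable_funeM.
  - move=> x _; rewrite -!EFinM -EFinD lee_fin; apply: (le_trans (pw x)).
    by rewrite !expRD le_eqVlt; apply/orP; left; apply/eqP; ring.
rewrite ge0_integralD //; last 4 first.
- by move=> x _; rewrite -EFinM lee_fin mulr_ge0 ?expR_ge0.
- exact: measurable_funeM.
- by move=> x _; rewrite -EFinM lee_fin mulr_ge0 ?expR_ge0.
- exact: measurable_funeM.
rewrite ge0_integralZl_EFin // ge0_integralZl_EFin //.
have hA := sgF a; rewrite unlock in hA.
have hB' := hB b b0; rewrite unlock in hB'.
have eA : (0 <= (t * expR (- c))%:E)%E by rewrite lee_fin.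
have eB : (0 <= ((1 - t) * expR d)%:E)%E by rewrite lee_fin.
apply: le_trans (leeD (lee_wpmul2l eA hA) (lee_wpmul2l eB hB')) _.
rewrite -!EFinM -EFinD lee_fin.
have E1 : expR (- c) * expR (a ^+ 2 * rho ^+ 2 / 2) = expR ga.
  by rewrite -expRD /c /al; congr expR; ring.
have E2 : expR d * expR (b ^+ 2 * sigma ^+ 2 / 2 + b * (sigma ^+ 2 / 2)) = expR ga.
  by rewrite -expRD /d /be; congr expR; ring.
rewrite -[t * expR (- c) * _]mulrA E1 -[(1 - t) * expR d * _]mulrA E2 (_ : t * expR ga + (1 - t) * expR ga = expR ga); last ring.
rewrite ler_expR.
have gaE : ga = p ^+ 2 * (rho + sigma) ^+ 2 / 2 + p * (sigma ^+ 2 / 2).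
  by rewrite /ga /t /al /be /a /b; field; rewrite rs0 !gt_eqF.
rewrite gaE.
have hs : sigma ^+ 2 <= (rho + sigma) ^+ 2 by nra.
have hp : p * sigma ^+ 2 <= p ^+ 2 * sigma ^+ 2 by nra.
have hq : p ^+ 2 * sigma ^+ 2 <= p ^+ 2 * (rho + sigma) ^+ 2 by nra.
lra.
Qed.
End Main.

Lemma sub_mono (R : realType) d (T : measurableType d) (P : probability T R)
  (f : T -> R) (rho rho' : R) :
  subgaussian P f rho -> 0 <= rho -> rho <= rho' -> subgaussian P f rho'.
Proof.
move=> h r0 rr lam; apply: le_trans (h lam) _; rewrite lee_fin ler_expR.
have : rho ^+ 2 <= rho' ^+ 2 by nra.
have : 0 <= lam ^+ 2 by rewrite sqr_ge0.
nra.
Qed.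

Theorem mainTheorem9 (R : realType) (dX dH : measure_display)
  (X : measurableType dX) (mu : probability X R) (n : nat)
  (P : probability (n.-tuple X) R) (Hs : measurableType dH)
  (pi : {measure set Hs -> \bar R}) (H : Hs -> n.-tuple X -> R)
  (p sigma : R) :
  is_product_prob mu P ->
  1 <= p -> 0 < sigma ->
  measurable_fun setT (fun z : Hs * n.-tuple X => H z.1 z.2) ->
  (forall h, P.-integrable setT (fun x => (H h x)%:E)) ->
  (forall h, subgaussian P (H h) sigma) ->
  (forall x, (0 < Zpart pi H x < +oo)%E) ->
  (0 < \int[pi]_h (expR (mean P (H h)))%:E < +oo)%E ->
  P.-integrable setT (fun x => (ln (fine (Zpart pi H x)))%:E) ->
  (* (i) *)
  ('E_P[fun x => expR (p * (- ln (fine (Zpart pi H x))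
                           + mean P (fun x' => ln (fine (Zpart pi H x')))))]
     <= (expR (p ^+ 2 * sigma ^+ 2))%:E)%E
  /\
  (* (ii) *)
  (forall (f : n.-tuple X -> R) (rho : R), 0 <= rho ->
    P.-integrable setT (fun x => (f x)%:E) ->
    subgaussian P f rho ->
    ('E_P[fun x => expR (p * (f x - mean P f
                              - ln (fine (Zpart pi H x))
                              + mean P (fun x' => ln (fine (Zpart pi H x')))))]
       <= (expR (p ^+ 2 * (rho + sigma) ^+ 2))%:E)%E).
Proof.
move=> _ p1 s0 mH iH sgH Zfin Zbfin iL; split.
  have hb := @B _ _ _ _ _ P _ pi H sigma mH iH sgH Zfin Zbfin iL p (ltW (lt_le_trans ltr01 p1)).
  apply: (le_trans hb).
  rewrite lee_fin ler_expR.
  have : p * sigma ^+ 2 <= p ^+ 2 * sigma ^+ 2 by nra.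
  lra.
move=> f rho r0 iF sgF.
apply: lim_arg; [by rewrite exprn_gt0 // (lt_le_trans ltr01 p1) | by rewrite addr_ge0 // ltW |].
move=> r rp; rewrite addrA.
apply: (@Cpos _ _ _ _ _ P _ pi H sigma mH iH sgH Zfin Zbfin iL p f (r + rho) p1 _ s0 iF); first by rewrite ltr_wpDr.
apply: (@sub_mono _ _ _ P f rho (r + rho) sgF r0); lra.
Qed.
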